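(* Let $\mathscr{A}$ be a finite alphabet. Every minimal subshift $\Xi\subseteq\mathscr{A}^{\mathbb{Z}}$ is periodically approximable.
   Context: $\mathscr{A}^{\mathbb{Z}}$ carries the product topology ($\mathscr{A}$ discrete) and the shift $(T\xi)(j)=\xi(j-1)$. A subshift is a non-empty closed subset $\Xi$ with $T(\Xi)\subseteq\Xi$; it is minimal if the orbit $\mathrm{Orb}(\xi)=\{T^n\xi:n\in\mathbb{Z}\}$ is dense in $\Xi$ for every $\xi\in\Xi$. The set $\mathcal{J}$ of subshifts carries the Hausdorff (Vietoris) topology, with basis sets $\{\Xi:\Xi\cap F=\emptyset,\ \Xi\cap O\neq\emptyset\ \forall O\in\mathcal{F}\}$, $F$ closed, $\mathcal{F}$ a finite family of open subsets. A subshift is periodic if it equals $\mathrm{Orb}(\eta)$ for some $\eta$ with $T^n\eta=\eta$ for some $n\geq1$. $\Xi$ is periodically approximable if some sequence of periodic subshifts converges to $\Xi$ in $\mathcal{J}$. *)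

(* Defs.v *)
From mathcomp Require Import all_boot all_order all_algebra.
Set Implicit Arguments. Unset Strict Implicit. Unset Printing Implicit Defensive.
Import Order.TTheory GRing.Theory Num.Theory.
Local Open Scope ring_scope.

Definition config (A : Type) := int -> A.

Definition shiftn (A : Type) (n : int) (xi : config A) : config A :=
  fun j => xi (j - n).
Definition shift (A : Type) (xi : config A) : config A := shiftn 1 xi.

(* Product topology on A^Z with A discrete: basis of cylinders
   {eta | eta j = xi j for all |j| <= N}. *)
Definition agree (A : Type) (N : nat) (xi eta : config A) : Prop :=
  forall j : int, (`|j| <= N)%N -> xi j = eta j.

Definition is_open (A : Type) (U : config A -> Prop) : Prop :=
  forall xi, U xi -> exists N : nat, forall eta, agree N xi eta -> U eta.

Definition is_closed (A : Type) (F : config A -> Prop) : Prop :=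
  is_open (fun xi => ~ F xi).

Definition subshift (A : Type) (X : config A -> Prop) : Prop :=
  (exists xi, X xi) /\ is_closed X /\ (forall xi, X xi -> X (shift xi)).

Definition orbit (A : Type) (xi : config A) : config A -> Prop :=
  fun eta => exists n : int, eta = shiftn n xi.

Definition dense_in (A : Type) (D X : config A -> Prop) : Prop :=
  forall eta, X eta -> forall U, is_open U -> U eta -> exists zeta, D zeta /\ U zeta.

Definition minimal (A : Type) (X : config A -> Prop) : Prop :=
  subshift X /\ forall xi, X xi -> dense_in (orbit xi) X.

Definition periodic_subshift (A : Type) (X : config A -> Prop) : Prop :=
  subshift X /\
  exists (eta : config A) (n : nat), (1 <= n)%N /\ shiftn (n%:Z) eta = eta /\
    (forall zeta, X zeta <-> orbit eta zeta).

(* Basic open set of the Vietoris topology determined by the closed set F and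
   the finite family Os of open sets. *)
Definition vbasic (A : Type) (F : config A -> Prop) (k : nat)
  (Os : 'I_k -> config A -> Prop) (X : config A -> Prop) : Prop :=
  (forall xi, X xi -> ~ F xi) /\ (forall i, exists xi, X xi /\ Os i xi).

Definition vconverges (A : Type) (Xs : nat -> config A -> Prop)
  (X : config A -> Prop) : Prop :=
  forall (F : config A -> Prop) (k : nat) (Os : 'I_k -> config A -> Prop),
    is_closed F -> (forall i, is_open (Os i)) -> vbasic F Os X ->
    exists N : nat, forall n : nat, (N <= n)%N -> vbasic F Os (Xs n).

Definition periodically_approximable (A : Type) (X : config A -> Prop) : Prop :=
  exists Xs : nat -> config A -> Prop,
    (forall n, periodic_subshift (Xs n)) /\ vconverges Xs X.

(* Main.v *)
Require Import Defs.
From mathcomp Require Import all_boot all_order all_algebra zify ring.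
From Stdlib Require Import ClassicalEpsilon Classical FunctionalExtensionality.
Set Implicit Arguments. Unset Strict Implicit. Unset Printing Implicit Defensive.
Import Order.TTheory GRing.Theory Num.Theory.
Local Open Scope ring_scope.

Lemma agree_trans (A : Type) m (a b c : config A) :
  agree m a b -> agree m b c -> agree m a c.
Proof. by move=> h1 h2 j hj; rewrite h1 // h2. Qed.

Lemma agree_sym (A : Type) m (a b : config A) : agree m a b -> agree m b a.
Proof. by move=> h j hj; rewrite h. Qed.

Lemma agree_mono (A : Type) m n (a b : config A) :
  (m <= n)%N -> agree n a b -> agree m a b.
Proof. move=> hmn h j hj; apply: h; lia. Qed.

Lemma cyl_open (A : Type) m (a : config A) : is_open (agree m a).
Proof. move=> x hx; exists m => y hy; exact: agree_trans hx hy. Qed.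

Lemma closed_lim (A : Type) (X : config A -> Prop) z :
  is_closed X -> (forall m, exists y, agree m z y /\ X y) -> X z.
Proof.
move=> hc hm; apply: NNPP => hz; have [M hM] := hc z hz.
have [y [hy Xy]] := hm M; exact: hM y hy Xy.
Qed.

Definition agl (A : Type) (m : nat) (w x : config A) :=
  forall j : int, (absz j < m)%N -> w j = x j.
Definition Pinf (A : Type) (x : nat -> config A) m w :=
  forall K, exists N, (K <= N)%N /\ agl m w (x N).

Lemma Pinf_step (A : finType) (x : nat -> config A) m w :
  Pinf x m w -> exists w', agl m w w' /\ Pinf x m.+1 w'.
Proof.
move=> hP; apply: NNPP => H.
pose wab (ab : A * A) : config A := fun j =>
  if j == m%:Z then ab.1 else if j == - m%:Z then ab.2 else w j.
have hK : forall ab, exists K, forall N, (K <= N)%N -> ~ agl m.+1 (wab ab) (x N).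
  move=> ab; apply: NNPP => hn; apply: H; exists (wab ab); split.
    move=> j hj; rewrite /wab; case: eqP => [e|_]; first lia.
    case: eqP => [e|_] //; lia.
  move=> K; apply: NNPP => hk; apply: hn; exists K => N hKN hag; apply: hk.
  by exists N.
have [Kf hKf] := ClassicalEpsilon.choice _ hK.
have [N [hN hag]] := hP (\max_(ab : A * A) Kf ab).
pose ab := (x N m%:Z, x N (- m%:Z)).
apply: (hKf ab N).
  apply: leq_trans hN; exact: (leq_bigmax ab).
move=> j hj; rewrite /wab /=; case: eqP => [->//|hj1].
case: eqP => [->//|hj2]; apply: hag; lia.
Qed.

Definition nextw (A : Type) (x : nat -> config A) m (w : config A) :=
  epsilon (inhabits w) (fun w' => agl m w w' /\ Pinf x m.+1 w').

Fixpoint Wseq (A : Type) (x : nat -> config A) m :=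
  match m with 0%N => x 0%N | m'.+1 => nextw x m' (Wseq x m') end.

Lemma Wseq_spec (A : finType) (x : nat -> config A) m :
  Pinf x m (Wseq x m) /\ agl m (Wseq x m) (Wseq x m.+1).
Proof.
elim: m => [|m [IH1 IH2]].
  have P0 : Pinf x 0 (Wseq x 0).
    by move=> K; exists K; split => // j.
  split; first exact: P0.
  exact: (proj1 (epsilon_spec (inhabits (x 0%N)) _ (Pinf_step P0))).
have P1 : Pinf x m.+1 (Wseq x m.+1).
  exact: (proj2 (epsilon_spec (inhabits (Wseq x m)) _ (Pinf_step IH1))).
split => //.
exact: (proj1 (epsilon_spec (inhabits (Wseq x m.+1)) _ (Pinf_step P1))).
Qed.

Lemma Wseq_agl (A : finType) (x : nat -> config A) m d :
  agl m (Wseq x m) (Wseq x (m + d)).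
Proof.
elim: d => [|d IH]; first by rewrite addn0.
move=> j hj; rewrite IH // addnS; apply: (proj2 (Wseq_spec x (m + d))); lia.
Qed.

Lemma cluster (A : finType) (x : nat -> config A) :
  exists z, forall m K, exists N, (K <= N)%N /\ agree m z (x N).
Proof.
exists (fun j => Wseq x (absz j).+1 j) => m K.
have [N [hN hag]] := (proj1 (Wseq_spec x m.+1)) K.
exists N; split => // j hj; rewrite -hag; last lia.
have -> : m.+1 = ((absz j).+1 + (m.+1 - (absz j).+1))%N by lia.
apply: Wseq_agl; lia.
Qed.
Local Open Scope ring_scope.

Lemma shiftnD (A : Type) a b (x : config A) :
  shiftn a (shiftn b x) = shiftn (a + b) x.
Proof. apply: functional_extensionality => j; rewrite /shiftn; congr x; ring. Qed.

Lemma uniform (A : finType) (X F : config A -> Prop) :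
  is_closed X -> is_closed F -> (forall x, X x -> ~ F x) ->
  exists M : nat, forall x y, X x -> agree M x y -> ~ F y.
Proof.
move=> hX hF hXF; apply: NNPP => H.
have hs : forall M : nat, exists p : config A * config A,
    X p.1 /\ agree M p.1 p.2 /\ F p.2.
  move=> M; apply: NNPP => hn; apply: H; exists M => x y Xx hxy Fy.
  by apply: hn; exists (x, y).
have [f hf] := ClassicalEpsilon.choice _ hs.
have [z hz] := cluster (fun N => (f N).1).
apply: (hXF z).
  apply: closed_lim hX _ => m.
  have [N [_ hN]] := hz m 0%N; exists (f N).1; split => //; by case: (hf N).
apply: closed_lim hF _ => m.
have [N [hmN hN]] := hz m m; have [_ [h1 h2]] := hf N.
exists (f N).2; split => //; apply: agree_trans hN _; exact: agree_mono h1.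
Qed.

Lemma X_shift_nat (A : Type) (X : config A -> Prop) y :
  subshift X -> X y -> forall k : nat, X (shiftn k%:Z y).
Proof.
move=> [_ [_ hsh]] Xy; elim=> [|k IH].
  have -> : shiftn 0 y = y by apply: functional_extensionality => j; rewrite /shiftn subr0.
  done.
have -> : shiftn k.+1%:Z y = shift (shiftn k%:Z y).
  rewrite /shift shiftnD; congr shiftn; lia.
exact: hsh.
Qed.

Lemma recurrence (A : finType) (X : config A -> Prop) xi :
  minimal X -> X xi -> forall n : nat, exists p : nat, (1 <= p)%N /\
    forall j : int, (absz j <= n)%N -> xi (j - p%:Z) = xi j.
Proof.
move=> [hsub hden] Xxi n.
have [z hz] := cluster (fun k => shiftn k%:Z xi).
have Xz : X z.
  apply: closed_lim (proj1 (proj2 hsub)) _ => m.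
  have [N [_ hN]] := hz m 0%N; exists (shiftn N%:Z xi); split => //.
  exact: X_shift_nat.
have [zeta [[m ->] hm]] := hden z Xz xi Xxi _ (@cyl_open _ n xi) (fun j _ => erefl).
have [N [hKN hN]] := hz (n + absz m)%N (absz m).+1.
exists (absz (m + N%:Z)); split; first lia.
move=> j hj; rewrite (hm j hj) /shiftn hN; last lia.
rewrite /shiftn; congr xi; lia.
Qed.

Lemma X_shiftN1 (A : finType) (X : config A -> Prop) y :
  minimal X -> X y -> X (shiftn (-1) y).
Proof.
move=> hmin Xy; apply: closed_lim (proj1 (proj2 (proj1 hmin))) _ => m.
have [p [hp hrec]] := recurrence hmin Xy m.+1.
exists (shiftn (p.-1)%:Z y); split; last exact: X_shift_nat (proj1 hmin) Xy _.
move=> j hj; rewrite /shiftn.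
have -> : j - -1 = j + 1 by ring.
rewrite -(hrec (j + 1)); last lia.
congr y; lia.
Qed.

Lemma X_shift (A : finType) (X : config A -> Prop) y :
  minimal X -> X y -> forall t : int, X (shiftn t y).
Proof.
move=> hmin Xy t.
have hneg : forall k : nat, X (shiftn (- k%:Z) y).
  elim=> [|k IH].
    have -> : shiftn (- 0%:Z) y = y by apply: functional_extensionality => j; rewrite /shiftn; congr y; lia.
    done.
  have -> : shiftn (- k.+1%:Z) y = shiftn (-1) (shiftn (- k%:Z) y).
    rewrite shiftnD; f_equal; lia.
  exact: (X_shiftN1 hmin IH).
case: t => k; first exact: (@X_shift_nat _ X y (proj1 hmin) Xy k).
rewrite NegzE; exact: hneg.
Qed.
Local Open Scope ring_scope.

Definition peta (A : Type) (xi : config A) (n p : nat) : config A :=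
  fun j => xi (n%:Z - ((n%:Z - j) %% p%:Z)%Z).

Section Per.
Variables (A : Type) (xi : config A) (n p : nat).
Hypothesis hp : (1 <= p)%N.
Hypothesis hrec : forall j : int, (absz j <= n)%N -> xi (j - p%:Z) = xi j.

Lemma iter_rec (q : nat) (i : int) :
  - n%:Z - p%:Z <= i - q%:Z * p%:Z -> i <= n%:Z -> xi (i - q%:Z * p%:Z) = xi i.
Proof.
elim: q => [|q IH] h1 h2; first by rewrite mul0r subr0.
have -> : i - q.+1%:Z * p%:Z = (i - q%:Z * p%:Z) - p%:Z.
  rewrite -addn1 PoszD mulrDl mul1r; ring.
rewrite hrec; last by nia.
apply: IH => //; nia.
Qed.

Lemma peta_E (j : int) : - n%:Z - p%:Z <= j -> j <= n%:Z -> peta xi n p j = xi j.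
Proof.
move=> h1 h2; rewrite /peta.
have hp0 : 0 < p%:Z by lia.
have e := divz_eq (n%:Z - j) p%:Z.
set Q := ((n%:Z - j) %/ p%:Z)%Z in e *; set r := ((n%:Z - j) %% p%:Z)%Z in e *.
have hr : 0 <= r < p%:Z by rewrite /r; lia.
have hQ : 0 <= Q by nia.
have ej : j = n%:Z - r - (absz Q)%:Z * p%:Z by nia.
rewrite [in RHS]ej iter_rec //; nia.
Qed.

Lemma peta_per (j k : int) : peta xi n p (j - k * p%:Z) = peta xi n p j.
Proof.
rewrite /peta; have -> : n%:Z - (j - k * p%:Z) = k * p%:Z + (n%:Z - j) by ring.
by rewrite modzMDl.
Qed.

Lemma peta_window (N : nat) : (N <= n)%N -> forall k : int, exists t : int,
  agree N (shiftn t xi) (shiftn k (peta xi n p)).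
Proof.
move=> hN k; have hp0 : 0 < p%:Z by lia.
pose c := N%:Z - n%:Z.
have e := divz_eq (k - c) p%:Z.
set d := ((k - c) %/ p%:Z)%Z in e; set r := ((k - c) %% p%:Z)%Z in e.
have hr : 0 <= r < p%:Z by rewrite /r; lia.
exists (c + r) => j hj; rewrite /shiftn.
have -> : j - k = (j - (c + r)) - d * p%:Z by rewrite /c; lia.
rewrite peta_per peta_E //; rewrite /c; lia.
Qed.

Lemma peta_shift_red (s : int) : exists t : nat, (t < p)%N /\
  shiftn s (peta xi n p) = shiftn t%:Z (peta xi n p).
Proof.
have hp0 : 0 < p%:Z by lia.
have e := divz_eq s p%:Z.
set d := (s %/ p%:Z)%Z in e; set r := (s %% p%:Z)%Z in e.
have hr : 0 <= r < p%:Z by rewrite /r; lia.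
exists (absz r); split; first lia.
apply: functional_extensionality => j; rewrite /shiftn.
have -> : j - s = (j - (absz r)%:Z) - d * p%:Z by lia.
by rewrite peta_per.
Qed.

Lemma peta_closed : is_closed (Defs.orbit (peta xi n p)).
Proof.
move=> z hz.
have key : forall m : nat, exists M : nat, forall t : nat, (t < m)%N ->
    forall z', agree M z z' -> z' <> shiftn t%:Z (peta xi n p).
  elim=> [|m [M hM]]; first by exists 0%N.
  have : exists j, z j <> shiftn m%:Z (peta xi n p) j.
    apply: NNPP => hn; apply: hz; exists m%:Z.
    apply: functional_extensionality => j; apply: NNPP => hj; apply: hn; by exists j.
  move=> [j hj]; exists (maxn M (absz j)) => t ht z' hzz'.
  case: (ltnP t m) => htm.
    apply: hM => //; apply: agree_mono hzz'; exact: leq_maxl.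
  have -> : t = m by lia.
  move=> e; apply: hj; rewrite -e; apply: hzz'; exact: leq_maxr.
have [M hM] := key p; exists M => z' hz' [s hs].
have [t [ht e]] := peta_shift_red s.
by apply: (hM t ht z' hz'); rewrite hs e.
Qed.

Lemma peta_periodic : periodic_subshift (Defs.orbit (peta xi n p)).
Proof.
split; last first.
  exists (peta xi n p), p; split => //; split => //.
  apply: functional_extensionality => j; rewrite /shiftn.
  by have := peta_per j 1; rewrite mul1r.
split; first by exists (peta xi n p); exists 0; apply: functional_extensionality => j; rewrite /shiftn subr0.
split; first exact: peta_closed.
move=> z [s ->]; exists (1 + s); rewrite /shift shiftnD //.
Qed.

End Per.
Unset Implicit Arguments.
Local Close Scope ring_scope.
Theorem corollary1 (A : finType) (X : config A -> Prop) :
  minimal X -> periodically_approximable X.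
Proof.
move=> hmin; have hmin' := hmin.
case: hmin => [[[xi Xxi] [Xcl Xsh]] hden].
have [pf hpf] := ClassicalEpsilon.choice _ (recurrence hmin' Xxi).
exists (fun n => Defs.orbit (peta xi n (pf n))); split.
  move=> n; apply: peta_periodic; exact: (proj1 (hpf n)).
move=> F k Os hF hO [hXF hXO].
have [M hM] := uniform Xcl hF hXF.
have hi : forall i : 'I_k, exists Ni : nat, forall n, (Ni <= n)%N ->
    exists y, Defs.orbit (peta xi n (pf n)) y /\ Os i y.
  move=> i; have [zi [Xzi Ozi]] := hXO i; have [R hR] := hO i zi Ozi.
  have [zeta [[m ->] hm]] := hden xi Xxi zi Xzi _ (@cyl_open _ R zi) (fun j _ => erefl).
  exists (R + absz m)%N => n hn; exists (shiftn m (peta xi n (pf n))).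
  split; first by exists m.
  have [hp hrec] := hpf n.
  apply: hR => j hj; rewrite hm // /shiftn (peta_E hp hrec) //; lia.
have [Kf hKf] := ClassicalEpsilon.choice _ hi.
exists (maxn M (\max_(i < k) Kf i)) => n hn; split.
  move=> y [s ->]; have [hp hrec] := hpf n.
  have [t ht] := peta_window hp hrec (N:=M) (leq_trans (leq_maxl _ _) hn) s.
  exact: (hM (shiftn t xi) _ (X_shift hmin' Xxi t) ht).
move=> i; apply: (hKf i); apply: leq_trans hn; apply: leq_trans (leq_maxr _ _).
exact: (leq_bigmax i).
Qed.
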